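(* Let $r,m\in\mathbb{N}$, let $E\subset\mathbb{R}^r$ be a compact domain and let $f:E\to\mathbb{R}^m$ be a solvable function. Then there exists a countable ordinal $\alpha<\omega_1$ such that $E_\alpha=\emptyset$, where $\{E_\gamma\}_\gamma$ is the sequence of $f$-removed sets on $E$.
   Context: A compact domain is a nonempty connected compact subset of $\mathbb{R}^r$; $\omega_1$ is the first uncountable ordinal. For $S\subseteq\mathbb{R}^r$ and $g:S\to\mathbb{R}^m$, $D_g$ is the set of points of $S$ at which $g$ is discontinuous with respect to the subspace topology of $S$. The sequence of $f$-removed sets on $E$: $E_0=E$; $E_{\alpha+1}=D_{f\restriction_{E_\alpha}}$; $E_\lambda=\bigcap_{\beta<\lambda}E_\beta$ for limit $\lambda$. A function $f:E\to\mathbb{R}^m$ is solvable if it is of class Baire one (a pointwise limit on $E$ of a sequence of continuous functions $E\to\mathbb{R}^m$) and for every closed set $K\subseteq E$ the set $D_{f\restriction_K}$ is closed. *)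

(* Defs.v *)
From HB Require Import structures.
From mathcomp Require Import all_boot all_order all_algebra.
From mathcomp Require Import all_classical all_reals topology normedtype sequences.
Set Implicit Arguments. Unset Strict Implicit. Unset Printing Implicit Defensive.
Import Order.TTheory GRing.Theory Num.Theory.
Import numFieldNormedType.Exports.
Local Open Scope classical_set_scope.
Local Open Scope ring_scope.

Section Defs.
Variables (R : realType) (r m : nat).
Local Notation V := 'rV[R]_r.
Local Notation W := 'rV[R]_m.

Definition compact_domain (E : set V) : Prop :=
  E !=set0 /\ connected E /\ compact E.

(* D_g for g restricted to S: points of S where g|_S is discontinuous
   (subspace topology of S) *)
Definition disc_set (S : set V) (g : V -> W) : set V :=
  [set x | S x /\ ~ (g @ within S (nbhs x) --> g x)].

Definition baire_one (E : set V) (f : V -> W) : Prop :=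
  exists g : nat -> V -> W,
    (forall n, {within E, continuous (g n)}) /\
    (forall x, E x -> (fun n => g n x) @ \oo --> f x).

Definition solvable (E : set V) (f : V -> W) : Prop :=
  baire_one E f /\
  (forall K : set V, closed K -> K `<=` E -> closed (disc_set K f)).

(* A countable well-order (T, lt): each t : T stands for the countable
   ordinal alpha = order type of {s | lt s t}. *)
Definition countable_wellorder (T : Type) (lt : T -> T -> Prop) : Prop :=
  well_founded lt /\
  (forall a b c, lt a b -> lt b c -> lt a c) /\
  (forall a b, lt a b \/ a = b \/ lt b a) /\
  (exists h : T -> nat, injective h).

Definition removed_sequence (T : Type) (lt : T -> T -> Prop)
    (E : set V) (f : V -> W) (S : T -> set V) : Prop :=
  forall t,
    ((forall s, ~ lt s t) -> S t = E) /\
    (forall s, lt s t -> (forall u, ~ (lt s u /\ lt u t)) ->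
       S t = disc_set (S s) f) /\
    ((exists s, lt s t) -> (forall s, lt s t -> exists u, lt s u /\ lt u t) ->
       S t = \bigcap_(s in [set s | lt s t]) S s).
End Defs.

(* Main.v *)
Require Import Defs.
From HB Require Import structures.
From mathcomp Require Import all_boot all_order all_algebra.
From mathcomp Require Import all_classical all_reals topology normedtype sequences.
From mathcomp Require Import lra.
Import Order.TTheory GRing.Theory Num.Theory.
Import numFieldNormedType.Exports.
Local Open Scope classical_set_scope.
Local Open Scope ring_scope.

Section Tower.
Variables (P : Type) (E : set P) (D : set P -> set P) (Good : set P -> Prop)
  (B : nat -> set P).
Hypothesis HDsub : forall X, D X `<=` X.
Hypothesis HGE : Good E.
Hypothesis HGsub : forall X, Good X -> X `<=` E.
Hypothesis HDne : forall X, Good X -> X !=set0 -> D X <> X.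
Hypothesis HB : forall X, Good X -> X !=set0 ->
  exists n, (B n `&` X) !=set0 /\ B n `&` D X = set0.

Definition tower (G : set P -> Prop) :=
  [/\ G E, (forall X, G X -> G (D X)) &
   (forall (I : Type) (A : set I) (g : I -> set P), A !=set0 ->
      (forall i, A i -> G (g i)) -> G (\bigcap_(i in A) g i))].

Hypothesis HGtower : tower Good.

Definition FF (X : set P) := forall G, tower G -> G X.

Lemma towerF : tower FF.
Proof.
split.
- by move=> G [].
- by move=> X HX G hG; case: (hG) => _ hD _; apply: hD; apply: HX.
- move=> I A g A0 hA G hG; case: (hG) => _ _ hI.
  by apply: hI => // i Ai; exact: (hA i Ai G hG).
Qed.

Lemma FGood X : FF X -> Good X.
Proof. by move=> h; apply: h. Qed.

Lemma FsubE X : FF X -> X `<=` E.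
Proof. by move=> /FGood /HGsub. Qed.

Definition ext X := forall Y, FF Y -> X `<=` Y -> X <> Y -> X `<=` D Y.

Lemma M_tower X : FF X -> ext X ->
  tower (fun Y => FF Y /\ (X `<=` Y \/ Y `<=` D X)).
Proof.
move=> FX eX; case: towerF => FE FD FI; split.
- by split => //; left; apply: FsubE.
- move=> Y [FY hY]; split; first by apply: FD.
  case: hY => [XY|YDX]; last by right; apply: subset_trans YDX.
  have [<-|nXY] := pselect (X = Y); first by right.
  by left; apply: eX.
- move=> I A g A0 hA; split.
    by apply: FI => // i /hA [].
  have [allX|] := pselect (forall i, A i -> X `<=` g i).
    by left => x Xx i Ai; apply: allX.
  move=> /existsNP [i /not_implyP [Ai nXg]].
  have [_ [//|gD]] := hA i Ai.
  by right => x hx; apply: gD; apply: hx.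
Qed.

Lemma ext_tower : tower (fun X => FF X /\ ext X).
Proof.
case: towerF => FE FD FI; split.
- split => // Y FY EY nEY; exfalso; apply: nEY.
  by apply/seteqP; split => //; apply: FsubE.
- move=> X [FX eX]; split; first exact: FD.
  move=> Y FY DXY nDXY.
  have [_ [XY|YDX]] := FY _ (@M_tower _ FX eX); last first.
    by exfalso; apply: nDXY; apply/seteqP; split.
  have [<-|nXY] := pselect (X = Y); first by [].
  by apply: subset_trans (eX Y FY XY nXY).
- move=> I A g A0 hA; split.
    by apply: FI => // i /hA [].
  move=> Y FY ZY nZY.
  have [allY|] := pselect (forall i, A i -> Y `<=` g i).
    by exfalso; apply: nZY; apply/seteqP; split => // x Yx i Ai; apply: allY.
  move=> /existsNP [i /not_implyP [Ai nYg]].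
  have [Fg eg] := hA i Ai.
  have [_ [gY|YDg]] := FY _ (@M_tower _ Fg eg); last first.
    by exfalso; apply: nYg; apply: subset_trans YDg _.
  have ngY : g i <> Y by move=> e; apply: nYg; rewrite e.
  move=> x hx; apply: (eg Y FY gY ngY); exact: hx.
Qed.

Lemma comp X Y : FF X -> FF Y -> X `<=` Y \/ Y `<=` D X.
Proof.
move=> FX FY; have [_ eX] := FX _ ext_tower.
by have [_ h] := FY _ (@M_tower _ FX eX).
Qed.

Lemma eq_sub (X Y : set P) : X `<=` Y -> Y `<=` X -> X = Y.
Proof. by move=> h1 h2; apply/seteqP; split. Qed.
Arguments eq_sub {X Y}.

Lemma empty_of (X : set P) : ~ (X !=set0) -> X = set0.
Proof.
move=> h; apply/seteqP; split => // x Xx; apply: h; by exists x.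
Qed.
Arguments empty_of {X}.

Lemma max_elt (G : set P -> Prop) : (forall X, G X -> FF X) -> (exists X, G X) ->
  exists M, G M /\ forall X, G X -> X `<=` M.
Proof.
move=> GF [X0 GX0]; case: towerF => FE FD FI.
pose U := [set X | FF X /\ forall Y, G Y -> Y `<=` X].
pose M := \bigcap_(X in U) X.
have FM : FF M.
  apply: FI; first by exists E; split => // Y /GF; apply: FsubE.
  by move=> X [].
have GM : forall Y, G Y -> Y `<=` M by move=> Y GY x Yx X [_ h]; exact: h Y GY x Yx.
exists M; split => //.
apply: contrapT => nGM.
have allD : forall Y, G Y -> Y `<=` D M.
  move=> Y GY; have [MY|//] := @comp _ _ FM (GF Y GY).
  by exfalso; apply: nGM; rewrite (eq_sub MY (GM Y GY)).
have UDM : U (D M) by split; [apply: FD | ].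
have DMM : D M = M by apply: eq_sub => //; move=> x Mx; apply: Mx.
have [M0|M0] := pselect (M !=set0).
  exact: (HDne _ (@FGood _ FM) M0 DMM).
have := GM _ GX0; rewrite (empty_of M0) subset0 => eX0.
by apply: nGM; rewrite (empty_of M0) -eX0.
Qed.

Lemma F0 : FF set0.
Proof.
case: towerF => FE FD FI.
pose M := \bigcap_(X in FF) X.
have FM : FF M by apply: FI => //; exists E.
have DMM : D M = M by apply: eq_sub => //; move=> x Mx; apply: Mx; apply: FD.
have [M0|M0] := pselect (M !=set0).
  by exfalso; apply: (HDne _ (@FGood _ FM) M0).
by rewrite -(empty_of M0).
Qed.

Definition TT := {X : set P | FF X}.
Definition ltT (a b : TT) := sval b `<=` sval a /\ sval b <> sval a.

Lemma TT_eq (a b : TT) : sval a = sval b -> a = b.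
Proof.
case: a => X HX; case: b => Y HY /= e; subst Y; congr exist.
exact: Prop_irrelevance.
Qed.

Theorem tower_main : exists (T : Type) (lt : T -> T -> Prop) (S : T -> set P) (t : T),
    countable_wellorder lt /\
    (forall t,
    ((forall s, ~ lt s t) -> S t = E) /\
    (forall s, lt s t -> (forall u, ~ (lt s u /\ lt u t)) ->
       S t = D (S s)) /\
    ((exists s, lt s t) -> (forall s, lt s t -> exists u, lt s u /\ lt u t) ->
       S t = \bigcap_(s in [set s | lt s t]) S s)) /\ S t = set0.
Proof.
case: towerF => FE FD FI.
have compT : forall a b : TT, sval a `<=` sval b \/ sval b `<=` sval a.
  move=> [X HX] [Y HY] /=; have [h|h] := @comp _ _ HX HY; first by left.
  by right; apply: subset_trans h _.
exists TT, ltT, (@sval _ _), (exist _ set0 F0); split; last split; last by [].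
- split; [|split; [|split]].
  + move=> a; apply: contrapT => na.
    pose G := [set X | exists b : TT, sval b = X /\ ~ Acc ltT b].
    have [M [[b [bM nAb]] maxM]] : exists M, G M /\ forall X, G X -> X `<=` M.
      apply: (@max_elt G); first by move=> X [b [<- _]]; exact: (proj2_sig b).
      by exists (sval a), a.
    apply: nAb; constructor => y [yb nyb].
    apply: contrapT => nAy; apply: nyb; apply: eq_sub => //.
    by rewrite bM; apply: maxM; exists y.
  + move=> a b c [ba nba] [cb ncb]; split; first exact: subset_trans cb ba.
    move=> eca; apply: ncb; apply: eq_sub => //; by rewrite eca.
  + move=> a b; have [e|nab] := pselect (sval a = sval b).
      by right; left; apply: TT_eq.
    have [h|h] := compT a b.
      by right; right; split => // e; apply: nab.
    by left; split => // e; apply: nab.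
  + have hspec : forall a : TT, exists n : nat,
        (sval a = set0 /\ n = 0%N) \/
        (exists k, n = k.+1 /\ (B k `&` sval a) !=set0 /\ B k `&` D (sval a) = set0).
      move=> [X HX] /=; have [X0|X0] := pselect (X !=set0).
        have [k hk] := HB _ (@FGood _ HX) X0.
        by exists k.+1; right; exists k.
      by exists 0%N; left; split => //; apply: empty_of.
    have [h hh] := choice hspec; exists h => a b eab.
    have [[a0 ha]|[k [hk [Bk1 Bk2]]]] := hh a.
      have [[b0 hb]|[k [hk _]]] := hh b; last by rewrite -eab ha in hk.
      by apply: TT_eq; rewrite a0 b0.
    have [[b0 hb]|[k' [hk' [Bk1' Bk2']]]] := hh b; first by rewrite eab hb in hk.
    have kk : k = k' by apply/eqP; rewrite -eqSS -hk -hk' eab.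
    subst k'.
    have dis : forall X Y : set P, (B k `&` X) !=set0 -> B k `&` Y = set0 ->
        ~ X `<=` Y.
      move=> X Y [x [Bx Xx]] e XY.
      have : (B k `&` Y) x by split => //; apply: XY.
      by rewrite e.
    case: a b eab hk Bk1 Bk2 hk' Bk1' Bk2' => [X HX] [Y HY] /= _ _ Bk1 Bk2 _ Bk1' Bk2'.
    have [XY|YDX] := @comp _ _ HX HY; last by exfalso; exact: (dis _ _ Bk1' Bk2 YDX).
    have [YX|XDY] := @comp _ _ HY HX; last by exfalso; exact: (dis _ _ Bk1 Bk2' XDY).
    by apply: TT_eq => /=; apply: eq_sub.
- move=> [Y HY]; split; [|split].
  + move=> nlt; apply: contrapT => ntE.
    apply: (nlt (exist _ E FE)); split => //=.
    exact: FsubE.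
  + move=> [X HX] [/= YX nYX] nobtw /=.
    have X0 : X !=set0.
      apply: contrapT => /empty_of X0; apply: nYX; apply: eq_sub => //.
      by rewrite X0.
    have [XY|YDX] := @comp _ _ HX HY.
      by exfalso; apply: nYX; apply: eq_sub.
    apply: contrapT => nY.
    apply: (nobtw (exist _ (D X) (FD _ HX))); split; split => //=.
      exact: (HDne _ (@FGood _ HX) X0).
  + move=> [s0 ls0] nolim /=.
    set Ic := \bigcap_(s in [set s | ltT s (exist _ Y HY)]) sval s.
    have FIc : FF Ic by apply: FI; [exists s0 | move=> [X HX] _].
    have tIc : Y `<=` Ic by move=> x tx s [ts _]; apply: ts.
    apply: contrapT => ntI.
    have [u [[uI nuI] [tu ntu]]] := nolim (exist _ Ic FIc) (conj tIc ntI).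
    apply: nuI; apply: eq_sub => //= x Icx; apply: Icx; by split.
Qed.

End Tower.

Section Ana.
Variables (R : realType) (r m : nat).
Local Notation V := 'rV[R]_r.
Local Notation W := 'rV[R]_m.

Lemma natSinv_lt (e : R) : 0 < e -> exists k : nat, k.+1%:R^-1 < e.
Proof.
move=> e0; have ie0 : 0 <= e^-1 by rewrite invr_ge0 ltW.
have := @archi_boundP _ (e^-1) ie0.
set N := Num.Def.archi_bound _ => hN; exists N.
rewrite invf_plt ?posrE ?ltr0Sn //; apply: (lt_le_trans hN).
by rewrite ler_nat.
Qed.


Lemma nested (K : set V) (Q : nat -> V -> R -> Prop) (x0 : V) (rho0 : R) :
  compact K -> K x0 -> 0 < rho0 ->
  (forall k x rho, K x -> 0 < rho -> (forall y, `|x - y| < rho -> `|x0 - y| < rho0) ->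
     exists x' d, [/\ K x', 0 < d, (forall y, `|x' - y| <= d -> `|x - y| < rho) & Q k x' d]) ->
  exists z, [/\ K z, `|x0 - z| < rho0 & forall k, exists x d, Q k x d /\ `|x - z| < d].
Proof.
move=> cK Kx0 rho00 step.
pose cond (p : V * R) := [/\ K p.1, 0 < p.2 & forall y, `|p.1 - y| < p.2 -> `|x0 - y| < rho0].
have hstep : forall kp : nat * (V * R), exists p' : V * R, cond kp.2 ->
   [/\ K p'.1, 0 < p'.2, (forall y, `|p'.1 - y| <= p'.2 -> `|kp.2.1 - y| < kp.2.2) & Q kp.1 p'.1 p'.2].
  move=> [k [x rho]]; have [[Kx rpos hin]|nc] := pselect (cond (x, rho)).
    have [x' [d h]] := step k x rho Kx rpos hin.
    by exists (x', d).
  by exists (x0, rho0).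
have [nx hnx] := choice hstep.
pose s := nat_rect (fun _ => (V * R)%type) (x0, rho0) (fun k p => nx (k, p)).
have sS : forall k, s k.+1 = nx (k, s k) by [].
have inv : forall k, cond (s k).
  elim => [|k IH]; first by split.
  have [K1 d1 in1 _] := hnx (k, s k) IH.
  rewrite sS; split => // y hy.
  case: IH => _ _ h; apply: h; apply: in1; exact: ltW.
have spec : forall k, (forall y, `|(s k.+1).1 - y| <= (s k.+1).2 -> `|(s k).1 - y| < (s k).2)
     /\ Q k (s k.+1).1 (s k.+1).2.
  by move=> k; have [_ _ h1 h2] := hnx (k, s k) (inv k); rewrite sS.
pose C n := [set y | `|(s n.+1).1 - y| <= (s n.+1).2].
have Cdec : forall n p, (n <= p)%N -> C p `<=` C n.
  move=> n p /subnK <-; elim: (p - n)%N => [|j IH] //= y hy.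
  apply: IH; move: hy; rewrite /C /= addSn => hy; apply: ltW; apply: (spec (j + n).+1).1; exact: hy.
have Cclosed : forall n, closed (C n).
  move=> n; have := @closed_ball_closed _ _ (s n.+1).1 (s n.+1).2.
  by rewrite closed_ballE //; case: (inv n.+1).
have [z [Kz clz]] : exists z, K z /\ cluster ((fun n => (s n.+1).1) @ \oo) z.
  by apply: cK; exists 0%N => // n _; case: (inv n.+1).
have zC : forall n, C n z.
  move=> n; rewrite ((closure_id (C n)).1 (Cclosed n)).
  move: clz; rewrite clusterE => clz; apply: clz.
  exists n => // p /= nm; apply: (Cdec n p nm).
  rewrite /C /= subrr normr0; case: (inv p.+1) => _ h _; exact: ltW h.
exists z; split => //.
  exact: (spec 0%N).1 (zC 0%N).
move=> k; exists (s k.+1).1, (s k.+1).2; split; first exact: (spec k).2.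
exact: (spec k.+1).1 (zC k.+1).
Qed.

Lemma baireK (K : set V) (F : nat -> set V) : compact K ->
  (forall y, K y -> exists n, F n y) ->
  (forall n y, K y -> ~ F n y -> exists e, 0 < e /\ forall z, K z -> `|y - z| < e -> ~ F n z) ->
  forall x rho, K x -> 0 < rho -> exists n x1 d,
    [/\ K x1, 0 < d, (forall y, `|x1 - y| < d -> `|x - y| < rho) &
        (forall y, K y -> `|x1 - y| < d -> F n y)].
Proof.
move=> cK cover opn x rho Kx rho0; apply: contrapT => nH.
pose Q := fun k x' d => forall z, K z -> `|x' - z| < d -> ~ F k z.
have step : forall k x' rho', K x' -> 0 < rho' -> (forall y, `|x' - y| < rho' -> `|x - y| < rho) ->
     exists x'' d, [/\ K x'', 0 < d, (forall y, `|x'' - y| <= d -> `|x' - y| < rho') & Q k x'' d].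
  move=> k x' rho' Kx' rho'0 inx'.
  have [y [Ky xy nFy]] : exists y, [/\ K y, `|x' - y| < rho' & ~ F k y].
    apply: contrapT => ny; apply: nH; exists k, x', rho'; split => // y Ky xy.
    by apply: contrapT => nFy; apply: ny; exists y.
  have [e [e0 he]] := opn k y Ky nFy.
  pose eta := rho' - `|x' - y|.
  have eta0 : 0 < eta by rewrite subr_gt0.
  have m0 : 0 < Num.min e eta by rewrite lt_min e0 eta0.
  have me : Num.min e eta <= e by rewrite ge_min lexx.
  have mt : Num.min e eta <= eta by rewrite ge_min lexx orbT.
  have hm : Num.min e eta / 2 < Num.min e eta by rewrite gtr_pMr // invf_lt1 // ltr1n.
  exists y, (Num.min e eta / 2); split => //.
  - by rewrite divr_gt0.
  - move=> w yw; apply: le_lt_trans (ler_distD y x' w) _.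
    have : `|y - w| < eta by apply: le_lt_trans yw _; apply: lt_le_trans hm mt.
    by rewrite /eta ltrBrDr addrC.
  - move=> z0 Kz0 yz0; apply: he => //.
    by apply: lt_le_trans yz0 _; apply: ltW; apply: lt_le_trans hm me.
have [z [Kz _ hz]] := @nested K Q x rho cK Kx rho0 step.
have [n Fnz] := cover z Kz.
have [x1 [d [Qn xz]]] := hz n.
exact: (Qn z Kz xz Fnz).
Qed.

Lemma dist3 (a b c d : W) : `|a - d| <= `|a - b| + `|b - c| + `|c - d|.
Proof.
apply: le_trans (ler_distD b a d) _; rewrite -addrA lerD2l; exact: ler_distD.
Qed.

Lemma osc (K : set V) (g : nat -> V -> W) (f : V -> W) : compact K ->
  (forall n y, K y -> forall e, 0 < e -> exists d, 0 < d /\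
      forall z, K z -> `|y - z| < d -> `|g n y - g n z| < e) ->
  (forall y, K y -> forall e, 0 < e -> exists N, forall i, (N <= i)%N -> `|f y - g i y| < e) ->
  forall e x rho, 0 < e -> K x -> 0 < rho -> exists x1 d,
    [/\ K x1, 0 < d, (forall y, `|x1 - y| < d -> `|x - y| < rho) &
      forall y z, K y -> K z -> `|x1 - y| < d -> `|x1 - z| < d -> `|f y - f z| <= e].
Proof.
move=> cK gc gf e x rho e0 Kx rho0.
pose c := e / 6.
have c0 : 0 < c by rewrite divr_gt0.
pose F n := [set y | forall i j, (n <= i)%N -> (n <= j)%N -> `|g i y - g j y| <= c].
have cover : forall y, K y -> exists n, F n y.
  move=> y Ky; have c20 : 0 < c / 2 by rewrite divr_gt0.
  have [N hN] := gf y Ky _ c20; exists N => i j Ni Nj.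
  have h1 := hN i Ni; have h2 := hN j Nj.
  have h3 := ler_distD (f y) (g i y) (g j y); rewrite (distrC (g i y) (f y)) in h3.
  lra.
have opn : forall n y, K y -> ~ F n y ->
    exists e, 0 < e /\ forall z, K z -> `|y - z| < e -> ~ F n z.
  move=> n y Ky nF.
  have [i [j [ni nj gt]]] : exists i j, [/\ (n <= i)%N, (n <= j)%N & c < `|g i y - g j y|].
    apply: contrapT => h; apply: nF => i j ni nj; rewrite leNgt; apply/negP => hc.
    by apply: h; exists i, j.
  pose eta := `|g i y - g j y| - c.
  have eta0 : 0 < eta / 2 by rewrite divr_gt0 // subr_gt0.
  have [d1 [d10 hd1]] := gc i y Ky _ eta0.
  have [d2 [d20 hd2]] := gc j y Ky _ eta0.
  exists (Num.min d1 d2); split; first by rewrite lt_min d10 d20.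
  move=> z Kz; rewrite lt_min => /andP [yz1 yz2] Fz.
  have h1 := hd1 z Kz yz1; have h2 := hd2 z Kz yz2.
  have h3 := Fz i j ni nj.
  have := dist3 (g i y) (g i z) (g j z) (g j y).
  rewrite (distrC (g j z)) => h4.
  rewrite /eta in eta0 h1 h2; lra.
have [n [x1 [d1 [Kx1 d10 in1 hF]]]] := @baireK K F cK cover opn x rho Kx rho0.
have fb : forall y, K y -> `|x1 - y| < d1 -> `|f y - g n y| <= 2 * c.
  move=> y Ky x1y; have [N hN] := gf y Ky _ c0.
  have h1 := hN (maxn N n) (leq_maxl _ _).
  have h2 := hF y Ky x1y (maxn N n) n (leq_maxr _ _) (leqnn _).
  have := ler_distD (g (maxn N n) y) (f y) (g n y); lra.
have [d2 [d20 hd2]] := gc n x1 Kx1 _ c0.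
exists x1, (Num.min d1 d2); split => //.
- by rewrite lt_min d10 d20.
- by move=> y; rewrite lt_min => /andP [h _]; apply: in1.
move=> y z Ky Kz; rewrite !lt_min => /andP [y1 y2] /andP [z1 z2].
have h1 := fb y Ky y1; have h2 := fb z Kz z1.
have h3 := hd2 y Ky y2; have h4 := hd2 z Kz z2.
have h5 := dist3 (f y) (g n y) (g n z) (f z).
have h6 := ler_distD (g n x1) (g n y) (g n z).
rewrite (distrC (g n y) (g n x1)) in h6.
rewrite (distrC (g n z) (f z)) in h5.
rewrite /c in h1 h2 h3 h4; lra.
Qed.

Lemma cont_point (K : set V) (g : nat -> V -> W) (f : V -> W) : compact K -> K !=set0 ->
  (forall n y, K y -> forall e, 0 < e -> exists d, 0 < d /\
      forall z, K z -> `|y - z| < d -> `|g n y - g n z| < e) ->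
  (forall y, K y -> forall e, 0 < e -> exists N, forall i, (N <= i)%N -> `|f y - g i y| < e) ->
  exists z, K z /\ forall e, 0 < e -> exists d, 0 < d /\
     forall y, K y -> `|z - y| < d -> `|f z - f y| <= e.
Proof.
move=> cK [x0 Kx0] gc gf.
pose Q := fun (k : nat) x d => forall y z, K y -> K z -> `|x - y| < d -> `|x - z| < d ->
   `|f y - f z| <= k.+1%:R^-1.
have step : forall k x rho, K x -> 0 < rho -> (forall y, `|x - y| < rho -> `|x0 - y| < 1) ->
     exists x' d, [/\ K x', 0 < d, (forall y, `|x' - y| <= d -> `|x - y| < rho) & Q k x' d].
  move=> k x rho Kx rho0 _.
  have ke : 0 < k.+1%:R^-1 :> R by rewrite invr_gt0 ltr0Sn.
  have [x1 [d1 [Kx1 d10 in1 h]]] := @osc K g f cK gc gf _ x rho ke Kx rho0.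
  have hd : d1 / 2 < d1 by rewrite gtr_pMr // invf_lt1 // ltr1n.
  exists x1, (d1 / 2); split => //; first by rewrite divr_gt0.
    by move=> y hy; apply: in1; apply: le_lt_trans hy hd.
  move=> y z Ky Kz hy hz; apply: h => //.
    exact: lt_trans hy hd.
  exact: lt_trans hz hd.
have [z [Kz _ hz]] := @nested K Q x0 1 cK Kx0 ltr01 step.
exists z; split => // e e0.
have [k hk] := @natSinv_lt e e0.
have [x [d [Qk xz]]] := hz k.
exists (d - `|x - z|); split; first by rewrite subr_gt0.
move=> y Ky zy; apply: le_trans (ltW hk).
apply: Qk => //; have := ler_distD z x y; lra.
Qed.
End Ana.

Section Top.
Variables (R : realType) (r m : nat).
Local Notation V := 'rV[R]_r.
Local Notation W := 'rV[R]_m.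

Lemma T1 (E K : set V) (g : V -> W) : {within E, continuous g} -> K `<=` E ->
  forall y, K y -> forall e, 0 < e -> exists d, 0 < d /\
      forall z, K z -> `|y - z| < d -> `|g y - g z| < e.
Proof.
move=> gc KE y Ky e e0.
have := (@subspace_continuousP _ E _ g).1 gc y (KE y Ky).
move/cvgrPdist_lt => /(_ e e0).
move=> /nbhs_normP [d /= d0 hd].
exists d; split => // z Kz yz.
exact: hd z yz (KE z Kz).
Qed.

Lemma T2 (g : nat -> V -> W) (f : V -> W) x : (fun n => g n x) @ \oo --> f x ->
  forall e, 0 < e -> exists N, forall i, (N <= i)%N -> `|f x - g i x| < e.
Proof.
move=> /cvgrPdist_lt h e e0; have [N _ hN] := h e e0.
by exists N.
Qed.

Lemma T3 (K : set V) (f : V -> W) z :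
  (forall e, 0 < e -> exists d, 0 < d /\ forall y, K y -> `|z - y| < d -> `|f z - f y| <= e) ->
  f @ within K (nbhs z) --> f z.
Proof.
move=> h; apply/cvgrPdist_le => e e0.
have [d [d0 hd]] := h e e0.
suff H : \forall y \near z, K y -> `|f z - f y| <= e by exact: H.
apply/nbhs_normP; exists d => //= y zy Ky.
exact: hd.
Qed.

Lemma T4 (Dc : set V) z : closed Dc -> ~ Dc z ->
  exists d, 0 < d /\ forall y, `|z - y| < d -> ~ Dc y.
Proof.
move=> cD nz.
have : open (~` Dc) by rewrite openC.
move=> /(_ z nz) /nbhs_normP [d /= d0 hd].
by exists d; split => // y zy; apply: hd.
Qed.
End Top.

Section Rat.
Variables (R : realType) (r : nat).
Local Notation V := 'rV[R]_r.

Lemma mx_norm_lt (A : V) (e : R) : 0 < e -> (forall i j, `|A i j| < e) -> `|A| < e.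
Proof.
move=> e0 h.
rewrite [`|A|]/Num.Def.normr /= mx_normrE.
apply: bigmax_lt => // ij _; exact: h.
Qed.

Lemma ratapprox (x : V) (e : R) : 0 < e -> exists q : 'rV[rat]_r, `|map_mx ratr q - x| < e.
Proof.
move=> e0.
have hj : forall j : 'I_r, exists qj : rat, `|ratr qj - x 0 j| < e.
  move=> j; have : x 0 j - e < x 0 j + e by lra.
  move=> /rat_in_itvoo [q]; rewrite in_itv /= => /andP [h1 h2].
  exists q; rewrite ltr_norml; apply/andP; split; lra.
have [qf hq] := choice hj.
exists (\row_j qf j); apply: mx_norm_lt => // i j.
by rewrite ord1 !mxE.
Qed.
End Rat.

Theorem mainTheorem6 (R : realType) (r m : nat) (E : set 'rV[R]_r)
    (f : 'rV[R]_r -> 'rV[R]_m) :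
  compact_domain E -> solvable E f ->
  exists (T : Type) (lt : T -> T -> Prop) (S : T -> set 'rV[R]_r) (t : T),
    countable_wellorder lt /\ removed_sequence lt E f S /\ S t = set0.
Proof.
move=> [E0 [_ cE]] [[g [gc gf]] cD].
pose Good := fun X : set 'rV[R]_r => closed X /\ X `<=` E.
pose B := fun n : nat => match (unpickle n : option ('rV[rat]_r * nat)) with
  | Some (q, k) => [set y : 'rV[R]_r | `|map_mx ratr q - y| < k.+1%:R^-1]
  | None => set0 end.
have cEc : closed E by apply: compact_closed => //; exact: norm_hausdorff.
have goodpt : forall X, Good X -> X !=set0 ->
    exists z, X z /\ ~ disc_set X f z.
  move=> X [cX XE] X0.
  have cXc : compact X by apply: subclosed_compact cE XE.
  have [z [Xz hz]] := @cont_point R r m X g f cXc X0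
     (fun n => @T1 R r m E X (g n) (gc n) XE)
     (fun y Xy => @T2 R r m g f y (gf y (XE y Xy))).
  exists z; split => // [[_ hd]]; apply: hd.
  exact: T3.
have H1 : forall X, disc_set X f `<=` X by move=> X x [].
have H2 : Good E by split.
have H3 : forall X, Good X -> X `<=` E by move=> X [].
have H4 : forall X, Good X -> X !=set0 -> disc_set X f <> X.
  move=> X GX X0 e; have [z [Xz nz]] := goodpt X GX X0.
  by apply: nz; rewrite e.
have H5 : forall X, Good X -> X !=set0 ->
    exists n, (B n `&` X) !=set0 /\ B n `&` disc_set X f = set0.
  move=> X GX X0; have [z [Xz nz]] := goodpt X GX X0.
  have cDX : closed (disc_set X f) by apply: cD; case: GX.
  have [d [d0 hd]] := @T4 R r _ z cDX nz.
  have d20 : 0 < d / 2 by rewrite divr_gt0.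
  have [k hk] := @natSinv_lt R (d / 2) d20.
  have k0 : 0 < k.+1%:R^-1 :> R by rewrite invr_gt0 ltr0Sn.
  have [q hq] := @ratapprox R r z _ k0.
  exists (pickle (q, k)); rewrite /B pickleK; split.
    by exists z; split.
  apply/seteqP; split => // y [/= qy Dy]; apply: (hd y) => //.
  have h := ler_distD (map_mx ratr q) z y; rewrite (distrC z (map_mx ratr q)) in h.
  apply: le_lt_trans h _; apply: lt_trans (ltrD hq qy) _.
  by apply: lt_le_trans (ltrD hk hk) _; rewrite -splitr.
have H6 : @tower _ E (fun X => disc_set X f) Good.
  split.
  + by split.
  + move=> X [cX XE]; split; first exact: cD.
    by move=> x [Xx _]; apply: XE.
  + move=> I A h [i Ai] hA; split.
      by apply: closed_bigI => j Aj; case: (hA j Aj).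
    by move=> x hx; case: (hA i Ai) => _ hE; apply: hE; apply: hx.
exact: (@tower_main _ E (fun X => disc_set X f) Good B H1 H3 H4 H5 H6).
Qed.
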